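(* Let $a,b\in\mathbb{N}$ with $a+b$ even, and let $n$ be a positive integer. Then $$2n\ \Big|\ \sum_{k=0}^{n-1}\binom{n-1}{k}^a\binom{-n-1}{k}^b\binom{2k}{k}(k+2)3^{n-1-k}.$$
   Context: $\binom{x}{k}=x(x-1)\cdots(x-k+1)/k!$ for any integer $x$. *)

(* Defs.v *)
From mathcomp Require Import all_boot all_order all_algebra.
Set Implicit Arguments. Unset Strict Implicit. Unset Printing Implicit Defensive.
Import Order.TTheory GRing.Theory Num.Theory.
Local Open Scope ring_scope.

Definition binq (x : int) (k : nat) : rat :=
  (\prod_(i < k) ((x - i%:Z)%:~R : rat)) / (k`!)%:R.

(* Main.v *)
Require Import Defs.
From mathcomp Require Import all_boot all_order all_algebra.
From mathcomp Require Import ring.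
Import Order.TTheory GRing.Theory Num.Theory.
Local Open Scope ring_scope.

Lemma prod_nat (m k : nat) :
  \prod_(i < k) (((m%:Z - i%:Z)%:~R) : rat) = (m ^_ k)%:R.
Proof.
elim: k => [|k IH]; first by rewrite big_ord0 ffactn0.
rewrite big_ord_recr /= IH ffactnSr natrM.
case: (leqP k m) => hkm.
  by rewrite natrB // intrD intrN.
by rewrite ffact_small // !mul0r.
Qed.

Lemma binq_nat (m k : nat) : binq m%:Z k = ('C(m, k))%:R.
Proof.
rewrite /binq prod_nat -bin_ffact natrM mulfK //.
by rewrite pnatr_eq0 -lt0n fact_gt0.
Qed.

Lemma prod_neg (n k : nat) :
  \prod_(i < k) (((- n%:Z - 1 - i%:Z)%:~R) : rat) = (-1) ^+ k * ((n + k) ^_ k)%:R.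
Proof.
elim: k => [|k IH]; first by rewrite big_ord0 ffactn0 expr0 mulr1.
rewrite big_ord_recr /= IH addnS ffactSS natrM exprS.
rewrite !intrD !intrN /=.
have -> : (((n + k)%N.+1)%:R : rat) = n%:R + 1 + k%:R by rewrite -addn1 !natrD; ring.
ring.
Qed.

Lemma binq_neg (n k : nat) : binq (- n%:Z - 1) k = (-1) ^+ k * ('C(n + k, k))%:R.
Proof.
rewrite /binq prod_neg -bin_ffact natrM -mulrA mulfK //.
by rewrite pnatr_eq0 -lt0n fact_gt0.
Qed.
Definition Bq (m : nat) : rat := (m * 'C(2 * m, m))%:R.

Lemma abel (y : nat -> rat) (N : nat) :
  \sum_(k < N) y k * 3%:R ^+ (N - k.+1) * (Bq k.+1 - 3%:R * Bq k)
  = y N * Bq N + \sum_(m < N) 3%:R ^+ (N - m.+1) * Bq m.+1 * (y m - y m.+1).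
Proof.
elim: N => [|N IH]; first by rewrite !big_ord0 /Bq mul0n mulr0 addr0.
rewrite big_ord_recr /= [in RHS]big_ord_recr /= subnn expr0.
have E1 : \sum_(k < N) y k * 3%:R ^+ (N.+1 - k.+1) * (Bq k.+1 - 3%:R * Bq k)
   = 3%:R * \sum_(k < N) y k * 3%:R ^+ (N - k.+1) * (Bq k.+1 - 3%:R * Bq k).
  rewrite mulr_sumr; apply: eq_bigr => i _.
  by rewrite subSS -(subnSK (ltn_ord i)) exprS; ring.
have E2 : \sum_(m < N) 3%:R ^+ (N.+1 - m.+1) * Bq m.+1 * (y m - y m.+1)
   = 3%:R * \sum_(m < N) 3%:R ^+ (N - m.+1) * Bq m.+1 * (y m - y m.+1).
  rewrite mulr_sumr; apply: eq_bigr => i _.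
  by rewrite subSS -(subnSK (ltn_ord i)) exprS; ring.
rewrite E1 E2 IH; ring.
Qed.

Lemma e_id (k : nat) : ((k + 2)%:R * ('C(2 * k, k))%:R : rat) = Bq k.+1 - 3%:R * Bq k.
Proof.
have L1 := mul_bin_diag (2 * k).+2 k.
have L2 := mul_bin_diag (2 * k).+1 k.
have S : 'C((2 * k).+1, k.+1) = 'C((2 * k).+1, k).
  rewrite -bin_sub; last by rewrite ltnS leq_pmull.
  congr 'C(_, _). rewrite subSS mul2n -addnn addnK //.
rewrite S /= in L2.
rewrite /Bq.
have -> : (2 * k.+1 = (2 * k).+2)%N by rewrite mulnS.
move/(congr1 (fun x : nat => (x%:R : rat))): L1.
move/(congr1 (fun x : nat => (x%:R : rat))): L2.
rewrite !natrM /= => L2 L1.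
rewrite -L1.
have -> : (((2 * k).+2)%:R : rat) = 2%:R * (k.+1)%:R by rewrite -natrM mulnS.
rewrite -mulrA -L2.
have -> : (((2 * k).+1)%:R : rat) = 2%:R * k%:R + 1 by rewrite -addn1 natrD natrM.
rewrite natrD; ring.
Qed.
Lemma Bq_S (m : nat) : Bq m.+1 = 2%:R * m.+1%:R * ('C((2 * m).+1, m))%:R.
Proof.
rewrite /Bq.
have -> : (2 * m.+1 = (2 * m).+2)%N by rewrite mulnS.
have L1 := mul_bin_diag (2 * m).+2 m.
rewrite /= in L1. rewrite -L1 natrM.
have -> : (((2 * m).+2)%:R : rat) = 2%:R * (m.+1)%:R by rewrite -natrM mulnS.
done.
Qed.

Definition Dv (n : nat) (x : rat) := exists2 z : rat, z \is a Num.int & x = (2 * n)%:R * z.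

Lemma Dv0 n : Dv n 0.
Proof. by exists 0; rewrite ?rpred0 ?mulr0. Qed.

Lemma DvD n x y : Dv n x -> Dv n y -> Dv n (x + y).
Proof. by move=> [z hz ->] [w hw ->]; exists (z + w); rewrite ?rpredD ?mulrDr. Qed.

Lemma DvM n w x : w \is a Num.int -> Dv n x -> Dv n (w * x).
Proof. by move=> hw [z hz ->]; exists (w * z); rewrite ?rpredM // mulrCA. Qed.

Lemma Dvsum n N (F : nat -> rat) : (forall i, Dv n (F i)) -> Dv n (\sum_(i < N) F i).
Proof.
move=> h; apply: (big_ind (Dv n)); [exact: Dv0 | exact: DvD | by move=> i _].
Qed.

Definition intf (f : nat -> rat) := forall m, f m \is a Num.int.
Definition Qd n (f : nat -> rat) := forall m, Dv n (Bq m.+1 * (f m - f m.+1)).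

Lemma Qmul n f g : intf f -> intf g -> Qd n f -> Qd n g -> Qd n (fun m => f m * g m).
Proof.
move=> hf hg qf qg m.
have -> : Bq m.+1 * (f m * g m - f m.+1 * g m.+1)
   = g m * (Bq m.+1 * (f m - f m.+1)) + f m.+1 * (Bq m.+1 * (g m - g m.+1)) by ring.
by apply: DvD; apply: DvM.
Qed.

Lemma intfX f e : intf f -> intf (fun m => f m ^+ e).
Proof. by move=> hf m; apply: rpredX. Qed.

Lemma QX n f e : intf f -> Qd n f -> Qd n (fun m => f m ^+ e).
Proof.
move=> hf qf; elim: e => [|e IH].
  by move=> m; rewrite !expr0 subrr mulr0; exact: Dv0.
move=> m; rewrite !exprS.
exact: (@Qmul n f (fun k => f k ^+ e) hf (@intfX f e hf) qf IH m).
Qed.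

Lemma Qu n : (0 < n)%N -> Qd n (fun m => (-1) ^+ m * ('C(n.-1, m))%:R).
Proof.
case: n => [//|n] _ m /=.
have -> : (-1) ^+ m * ('C(n, m))%:R - (-1) ^+ m.+1 * ('C(n, m.+1))%:R
   = (-1) ^+ m * ('C(n.+1, m.+1))%:R :> rat.
  by rewrite binS natrD exprS; ring.
have L := mul_bin_diag n.+1 m. rewrite /= in L.
rewrite Bq_S.
exists ((-1) ^+ m * ('C((2 * m).+1, m))%:R * ('C(n, m))%:R).
  by rewrite !rpredM ?natr_int ?rpredX ?rpredN ?rpred1.
move/(congr1 (fun x : nat => (x%:R : rat))): L; rewrite !natrM => L.
transitivity ((-1) ^+ m * 2%:R * ('C((2 * m).+1, m))%:R * ((m.+1)%:R * ('C(n.+1, m.+1))%:R) : rat); first by ring.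
rewrite -L; ring.
Qed.

Lemma Qv n : Qd n (fun m => ('C(n + m, m))%:R).
Proof.
move=> m /=.
have -> : ('C(n + m, m))%:R - ('C(n + m.+1, m.+1))%:R = - ('C(n + m, m.+1))%:R :> rat.
  by rewrite addnS binS natrD; ring.
have L := mul_bin_left (n + m) m. rewrite addnK in L.
rewrite Bq_S.
exists (- (('C((2 * m).+1, m))%:R * ('C(n + m, m))%:R)).
  by rewrite rpredN !rpredM ?natr_int.
move/(congr1 (fun x : nat => (x%:R : rat))): L; rewrite !natrM => L.
transitivity (- (2%:R * ('C((2 * m).+1, m))%:R * ((m.+1)%:R * ('C(n + m, m.+1))%:R)) : rat); first by ring.
rewrite L; ring.
Qed.

Theorem lemma3p4 (a b n : nat) (hab : ~~ odd (a + b)%N) (hn : (0 < n)%N) :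
  (\sum_(k < n) binq (n.-1)%:Z k ^+ a * binq (- (n%:Z) - 1) k ^+ b
      * binq (2 * k)%N%:Z k * (k + 2)%:R * 3%:R ^+ (n.-1 - k)%N)
    / (2 * n)%N%:R \is a Num.int.
Proof.
pose u := fun k : nat => ((-1) ^+ k * ('C(n.-1, k))%:R : rat).
pose v := fun k : nat => (('C(n + k, k))%:R : rat).
pose y := fun k : nat => u k ^+ a * v k ^+ b.
have hodd : odd a = odd b.
  by move: hab; rewrite oddD; case: (odd a); case: (odd b).
have Et : forall k : 'I_n,
    binq (n.-1)%:Z k ^+ a * binq (- (n%:Z) - 1) k ^+ b
      * binq (2 * k)%N%:Z k * (k + 2)%:R * 3%:R ^+ (n.-1 - k)%N
    = y k * 3%:R ^+ (n - k.+1) * (Bq k.+1 - 3%:R * Bq k).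
  move=> k.
  rewrite binq_nat binq_neg binq_nat -e_id.
  have -> : (n.-1 - k = n - k.+1)%N by rewrite -subn1 -subnDA add1n.
  rewrite /y /u /v !exprMn.
  have -> : ((-1) ^+ k) ^+ b = ((-1) ^+ k) ^+ a :> rat.
    by rewrite -!exprM -[LHS]signr_odd -[RHS]signr_odd !oddM hodd.
  ring.
rewrite (eq_bigr _ (fun k _ => Et k)) abel.
have intu : intf u by move=> m; rewrite /u rpredM ?natr_int ?rpredX ?rpredN ?rpred1.
have intv : intf v by move=> m; rewrite /v natr_int.
have inty : intf y by move=> m; rewrite /y rpredM ?rpredX ?intu ?intv.
have Qy : Qd n y.
  apply: (@Qmul n (fun k => u k ^+ a) (fun k => v k ^+ b)).
  - exact: intfX.
  - exact: intfX.
  - apply: QX => //; exact: Qu.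
  - apply: QX => //; exact: Qv.
have hD : Dv n (y n * Bq n
   + \sum_(m < n) 3%:R ^+ (n - m.+1) * Bq m.+1 * (y m - y m.+1)).
  apply: DvD.
    have -> : Bq n = 2%:R * n%:R * ('C((2 * n.-1).+1, n.-1))%:R.
      by rewrite -{1}(prednK hn) Bq_S prednK.
    exists (y n * ('C((2 * n.-1).+1, n.-1))%:R).
      by rewrite rpredM ?inty ?natr_int.
    rewrite natrM; ring.
  apply: (@Dvsum n n (fun m => 3%:R ^+ (n - m.+1) * Bq m.+1 * (y m - y m.+1))) => i.
  rewrite -mulrA; apply: DvM; first by rewrite rpredX ?natr_int.
  exact: Qy.
case: hD => z hz ->.
rewrite mulrC mulKf //.
by rewrite pnatr_eq0 muln_eq0 negb_or /= -lt0n hn.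
Qed.
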